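(* Let $\Phi:\mathbb{C}^2\to\mathbb{C}^3$ be the cross cap $\Phi(s,t)=(s^2,st,t)$. Then $\Omega_{\mathbb{C}}(\Phi)=[u]$.
   Context: For a holomorphic germ $\Phi:(\mathbb{C}^2,0)\to(\mathbb{C}^3,0)$ with $\operatorname{rank} d\Phi_z=2$ for $z\neq0$, the complex Smale invariant $\Omega_{\mathbb{C}}(\Phi)$ is the homotopy class of $d\Phi|_{S^3}:S^3\to V_2(\mathbb{C}^3)$ (complex Stiefel manifold of 2-frames in $\mathbb{C}^3$, via the standard trivializations of $T\mathbb{C}^2$, $T\mathbb{C}^3$), viewed in $\pi_3(V_2(\mathbb{C}^3))\cong\pi_3(U(3))\cong\pi_3(U)$ (the first isomorphism induced by the projection $U(3)\to V_2(\mathbb{C}^3)$). $u:S^3\to U(2)\subset U$ is $u_q=\begin{pmatrix}z&-\bar w\\ w&\bar z\end{pmatrix}$ for the unit quaternion $q=z+wj$, with $\mathbb{C}^2\cong\mathbb{H}$ via $(z,w)\leftrightarrow z+wj$; $[u]$ generates $\pi_3(U)$. *)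

(* Defs.v *)
From HB Require Import structures.
From mathcomp Require Import all_boot all_order all_algebra.
From mathcomp Require Import all_classical all_reals topology normedtype.
From mathcomp Require Import complex.
Set Implicit Arguments. Unset Strict Implicit. Unset Printing Implicit Defensive.
Import Order.TTheory GRing.Theory Num.Theory.
Import numFieldNormedType.Exports.
Local Open Scope ring_scope.
Local Open Scope classical_set_scope.

Section Defs.
Variable R : realType.
Local Notation C := (complex R).

(** The unit sphere S^3 in C^2 = R^4, real coordinates x = (Re z, Im z, Re w, Im w). *)
Definition S3 : set 'rV[R]_4 := [set x | \sum_(i < 4) x 0 i ^+ 2 = 1].

Definition zcoord (x : 'rV[R]_4) : C := (x 0 0 +i* x 0 1)%C.
Definition wcoord (x : 'rV[R]_4) : C := (x 0 2 +i* x 0 3)%C.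

(** Real coordinates of a complex 3x2 matrix, used to topologize frames. *)
Definition realify (A : 'M[C]_(3, 2)) : 'M[R]_(3, 2) * 'M[R]_(3, 2) :=
  (map_mx (@complex.Re R) A, map_mx (@complex.Im R) A).

(** (Non-compact) complex Stiefel manifold V_2(C^3): 3x2 complex matrices of
    rank 2, i.e. injective C-linear maps C^2 -> C^3 (pairs of C-independent
    column vectors). *)
Definition V2C3 : set 'M[C]_(3, 2) := [set A | \rank A = 2%N].

Definition homotopic_S3_V2 (f g : 'rV[R]_4 -> 'M[C]_(3, 2)) : Prop :=
  exists H : R -> 'rV[R]_4 -> 'M[C]_(3, 2),
    [/\ {within [set p : R * 'rV[R]_4 | 0 <= p.1 <= 1 /\ S3 p.2],
           continuous (fun p => realify (H p.1 p.2))},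
        (forall t x, 0 <= t <= 1 -> S3 x -> V2C3 (H t x)),
        (forall x, S3 x -> H 0 x = f x) &
        (forall x, S3 x -> H 1 x = g x)].

(** Cross cap Phi(s,t) = (s^2, s t, t); its Jacobian matrix (columns
    dPhi/ds, dPhi/dt) in the standard trivializations. *)
Definition crosscap (s t : C) : C * C * C := (s ^+ 2, s * t, t).

Definition dcrosscap (s t : C) : 'M[C]_(3, 2) :=
  \matrix_(i < 3, j < 2)
    match nat_of_ord i, nat_of_ord j with
    | 0, 0 => 2%:R * s | 0, _ => 0
    | 1, 0 => t        | 1, _ => s
    | _, 0 => 0        | _, _ => 1
    end.

(** The complex Smale invariant representative: dPhi restricted to S^3. *)
Definition smale_map_crosscap (x : 'rV[R]_4) : 'M[C]_(3, 2) :=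
  dcrosscap (zcoord x) (wcoord x).

(** u_q = [[z, -conj w], [w, conj z]] in U(2) ⊂ U(3) (upper-left block),
    composed with the projection U(3) -> V_2(C^3) (first two columns). *)
Definition u_frame (x : 'rV[R]_4) : 'M[C]_(3, 2) :=
  let z := zcoord x in let w := wcoord x in
  \matrix_(i < 3, j < 2)
    match nat_of_ord i, nat_of_ord j with
    | 0, 0 => z | 0, _ => - (w^*)%C
    | 1, 0 => w | 1, _ => (z^*)%C
    | _, _ => 0
    end.

End Defs.

(* Main.v *)
Require Import Defs.
From HB Require Import structures.
From mathcomp Require Import all_boot all_order all_algebra.
From mathcomp Require Import all_classical all_reals topology normedtype.
From mathcomp Require Import complex.
From mathcomp Require Import ring lra.
Set Implicit Arguments. Unset Strict Implicit. Unset Printing Implicit Defensive.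
Import Order.TTheory GRing.Theory Num.Theory.
Import numFieldNormedType.Exports.
Local Open Scope ring_scope.
Local Open Scope classical_set_scope.

Section S.
Variable R : realType.

Lemma entry_cont m n (i : 'I_m) (j : 'I_n) :
  continuous (fun M : 'M[R]_(m, n) => M i j).
Proof.
move=> u A /nbhs_ballP[e /= e0 eA].
apply/nbhs_ballP; exists e => //= v [_ uv]; apply: eA; exact: uv.
Qed.

Lemma mx_cont (T : topologicalType) m n (f : T -> 'M[R]_(m, n)) :
  (forall i j, continuous (fun x => f x i j)) -> continuous f.
Proof.
move=> fc x; apply/cvg_mx_entourageP => A entA.
rewrite near_simpl.
apply: (@filter_forall _ _ (fun i y => forall j, (f x i j, f y i j) \in A)) => i.
apply: (@filter_forall _ _ (fun j y => (f x i j, f y i j) \in A)) => j.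
have /cvg_entourageP := fc i j x.
move=> /(_ A entA); rewrite near_simpl => H.
apply: filterS H => y Ay; rewrite inE; exact: Ay.
Qed.

Definition T := (R * 'rV[R]_4)%type.
Definition cc (g : T -> complex R) :=
  continuous (fun p => complex.Re (g p)) /\ continuous (fun p => complex.Im (g p)).

Lemma cc_cst c : cc (fun _ => c).
Proof. by split => x; apply: cvg_cst. Qed.

Lemma ReD (a b : complex R) : complex.Re (a + b) = complex.Re a + complex.Re b.
Proof. by case: a b => [? ?] [? ?]. Qed.
Lemma ImD (a b : complex R) : complex.Im (a + b) = complex.Im a + complex.Im b.
Proof. by case: a b => [? ?] [? ?]. Qed.
Lemma ReN (a : complex R) : complex.Re (- a) = - complex.Re a.
Proof. by case: a. Qed.
Lemma ImN (a : complex R) : complex.Im (- a) = - complex.Im a.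
Proof. by case: a. Qed.
Lemma ReJ (a : complex R) : complex.Re (a^*%C) = complex.Re a.
Proof. by case: a. Qed.
Lemma ImJ (a : complex R) : complex.Im (a^*%C) = - complex.Im a.
Proof. by case: a. Qed.
Lemma ReM' (a b : complex R) : complex.Re (a * b) = complex.Re a * complex.Re b - complex.Im a * complex.Im b.
Proof. by case: a b => [? ?] [? ?]. Qed.
Lemma ImM' (a b : complex R) : complex.Im (a * b) = complex.Re a * complex.Im b + complex.Im a * complex.Re b.
Proof. by case: a b => [? ?] [? ?]. Qed.

Lemma cc_add f g : cc f -> cc g -> cc (fun p => f p + g p).
Proof.
move=> [f1 f2] [g1 g2]; split => x.
- have -> : (fun p => complex.Re (f p + g p)) = (fun p => complex.Re (f p)) + (fun p => complex.Re (g p)).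
    by apply/funext => p; rewrite ?ReD ?ImD ?ReM' ?ImM'.
  apply: continuousD; by [apply: f1|apply: g1|apply: f2|apply: g2].
- have -> : (fun p => complex.Im (f p + g p)) = (fun p => complex.Im (f p)) + (fun p => complex.Im (g p)).
    by apply/funext => p; rewrite ?ReD ?ImD ?ReM' ?ImM'.
  apply: continuousD; by [apply: f1|apply: g1|apply: f2|apply: g2].
Qed.

Lemma cc_mul f g : cc f -> cc g -> cc (fun p => f p * g p).
Proof.
move=> [f1 f2] [g1 g2]; split => x.
- have -> : (fun p => complex.Re (f p * g p)) = (fun p => complex.Re (f p)) \* (fun p => complex.Re (g p)) - (fun p => complex.Im (f p)) \* (fun p => complex.Im (g p)).
    by apply/funext => p; rewrite ?ReD ?ImD ?ReM' ?ImM'.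
  apply: continuousB; apply: continuousM; by [apply: f1|apply: g1|apply: f2|apply: g2].
- have -> : (fun p => complex.Im (f p * g p)) = (fun p => complex.Re (f p)) \* (fun p => complex.Im (g p)) + (fun p => complex.Im (f p)) \* (fun p => complex.Re (g p)).
    by apply/funext => p; rewrite ?ReD ?ImD ?ReM' ?ImM'.
  apply: continuousD; apply: continuousM; by [apply: f1|apply: g1|apply: f2|apply: g2].
Qed.

Lemma cc_opp f : cc f -> cc (fun p => - f p).
Proof.
move=> [f1 f2]; split => x.
- have -> : (fun p => complex.Re (- f p)) = (fun p => - complex.Re (f p)).
    by apply/funext => p; rewrite ?ReN ?ImN ?ReJ ?ImJ.
  apply: continuousN; by [apply: f1|apply: f2].
- have -> : (fun p => complex.Im (- f p)) = (fun p => - complex.Im (f p)).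
    by apply/funext => p; rewrite ?ReN ?ImN ?ReJ ?ImJ.
  apply: continuousN; by [apply: f1|apply: f2].
Qed.

Lemma cc_conj f : cc f -> cc (fun p => (f p)^*%C).
Proof.
move=> [f1 f2]; split => x.
- have -> : (fun p => complex.Re ((f p)^*%C)) = (fun p => complex.Re (f p)).
    by apply/funext => p; rewrite ?ReN ?ImN ?ReJ ?ImJ.
  by apply: f1.
- have -> : (fun p => complex.Im ((f p)^*%C)) = (fun p => - complex.Im (f p)).
    by apply/funext => p; rewrite ?ReN ?ImN ?ReJ ?ImJ.
  apply: continuousN; by [apply: f1|apply: f2].
Qed.

Lemma coord_cont k : continuous (fun p : T => p.2 0 k).
Proof.
move=> x; apply: (@continuous_comp _ _ _ (fun p : T => p.2) (fun M : 'rV[R]_4 => M 0 k)).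
  exact: cvg_snd.
exact: entry_cont.
Qed.

Lemma fst_cont : continuous (fun p : T => p.1).
Proof. move=> x; exact: cvg_fst. Qed.

Lemma cc_z : cc (fun p => zcoord p.2).
Proof. by split; [exact: coord_cont|exact: coord_cont]. Qed.
Lemma cc_w : cc (fun p => wcoord p.2).
Proof. by split; [exact: coord_cont|exact: coord_cont]. Qed.
Lemma cc_t : cc (fun p => (p.1)%:C%C).
Proof. split; [exact: fst_cont| move=> x; exact: cvg_cst]. Qed.


Lemma ReM (a b : complex R) : complex.Re (a * b) = complex.Re a * complex.Re b - complex.Im a * complex.Im b.
Proof. by case: a b => [? ?] [? ?]. Qed.
Lemma ImM (a b : complex R) : complex.Im (a * b) = complex.Re a * complex.Im b + complex.Im a * complex.Re b.
Proof. by case: a b => [? ?] [? ?]. Qed.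


Lemma cc_realc (s : T -> R) : continuous s -> cc (fun p => (s p)%:C%C).
Proof. move=> sc; split; [exact: sc| move=> x; exact: cvg_cst]. Qed.

Definition Hh (t : R) (x : 'rV[R]_4) : 'M[complex R]_(3,2) :=
  \matrix_(i, j) ((1 - t)%:C%C * smale_map_crosscap x i j + t%:C%C * u_frame x i j).

Lemma cc_ext (f g : T -> complex R) : (forall p, f p = g p) -> cc g -> cc f.
Proof. by move=> e; have -> : f = g by apply/funext. Qed.

Lemma cc_zc : cc (fun p : T => (p.2 0 0 -i* p.2 0 1)%C).
Proof. split; first exact: coord_cont. move=> x; apply: continuousN; exact: coord_cont. Qed.
Lemma cc_wc : cc (fun p : T => (p.2 0 2 -i* p.2 0 3)%C).
Proof. split; first exact: coord_cont. move=> x; apply: continuousN; exact: coord_cont. Qed.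

Ltac ccsolve := repeat first [ apply: cc_cst | apply: cc_add | apply: cc_mul
  | apply: cc_opp | apply: cc_conj | apply: cc_z | apply: cc_w | apply: cc_zc | apply: cc_wc ].

Lemma cc_D (i : 'I_3) (j : 'I_2) : cc (fun p : T => smale_map_crosscap p.2 i j).
Proof.
apply: cc_ext => [p|]; first by rewrite /smale_map_crosscap /dcrosscap mxE; reflexivity.
case: i => [[|[|[|i]]] Hi] //; case: j => [[|[|j]] Hj] //=; ccsolve.
Qed.

Lemma cc_U (i : 'I_3) (j : 'I_2) : cc (fun p : T => u_frame p.2 i j).
Proof.
apply: cc_ext => [p|]; first by rewrite /u_frame mxE; reflexivity.
case: i => [[|[|[|i]]] Hi] //; case: j => [[|[|j]] Hj] //=; ccsolve.
Qed.

Lemma cc_H (i : 'I_3) (j : 'I_2) : cc (fun p => Hh p.1 p.2 i j).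
Proof.
apply: cc_ext => [p|]; first by rewrite mxE; reflexivity.
have c1 : cc (fun p : T => (1 - p.1)%:C%C).
  apply: cc_realc => x; apply: continuousB; [exact: cvg_cst|exact: fst_cont].
apply: cc_add; apply: cc_mul; by [apply: c1|apply: cc_t|apply: cc_D|apply: cc_U].
Qed.

Lemma realify_cont : continuous (fun p : T => realify (Hh p.1 p.2)).
Proof.
have h1 : continuous (fun p : T => map_mx (@complex.Re R) (Hh p.1 p.2)).
  apply: mx_cont => i j.
  have -> : (fun p : T => map_mx (@complex.Re R) (Hh p.1 p.2) i j) = (fun p => complex.Re (Hh p.1 p.2 i j)).
    by apply/funext => p; rewrite mxE.
  exact: (cc_H i j).1.
have h2 : continuous (fun p : T => map_mx (@complex.Im R) (Hh p.1 p.2)).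
  apply: mx_cont => i j.
  have -> : (fun p : T => map_mx (@complex.Im R) (Hh p.1 p.2) i j) = (fun p => complex.Im (Hh p.1 p.2 i j)).
    by apply/funext => p; rewrite mxE.
  exact: (cc_H i j).2.
move=> x; exact: cvg_pair (h1 x) (h2 x).
Qed.
End S.
Lemma det22 (F : comNzRingType) (M : 'M[F]_2) : \det M = M 0 0 * M 1 1 - M 0 1 * M 1 0.
Proof.
rewrite (expand_det_row _ 0) !big_ord_recl big_ord0 addr0 /cofactor.
rewrite !det_mx11 !mxE /= expr0 expr1 mul1r mulN1r mulrN.
have -> : lift 0 0 = 1 :> 'I_2 by apply/val_inj.
have -> : lift 1 0 = 0 :> 'I_2 by apply/val_inj.
by [].
Qed.
Lemma rank2_of (F : fieldType) (A : 'M[F]_(3,2)) (i j : 'I_3) :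
  A i 0 * A j 1 - A i 1 * A j 0 != 0 -> \rank A = 2%N.
Proof.
move=> H.
pose f (k : 'I_2) := if val k == 0%N then i else j.
have H2 : \rank (rowsub f A) = 2%N.
  apply: mxrank_unit; rewrite unitmxE unitfE det22 !mxE /f /=. exact: H.
have := mxrankS (rowsub_sub f A); rewrite H2 => H3.
by apply/eqP; rewrite eqn_leq H3 rank_leq_col.
Qed.

Section M.
Variable R : realType.

Lemma S3_sum (x : 'rV[R]_4) : S3 x -> x 0 0 ^+ 2 + x 0 1 ^+ 2 + x 0 2 ^+ 2 + x 0 3 ^+ 2 = 1.
Proof.
rewrite /S3 /= => <-; rewrite !big_ord_recl big_ord0 addr0 !addrA.
have -> : lift ord0 ord0 = 1 :> 'I_4 by apply/val_inj.
by congr (x 0 _ ^+ 2 + _ + x 0 _ ^+ 2 + x 0 _ ^+ 2); apply/val_inj.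
Qed.

Lemma H0 (x : 'rV[R]_4) : Hh 0 x = smale_map_crosscap x.
Proof. by apply/matrixP => i j; rewrite mxE subr0 rmorph0 rmorph1 mul1r mul0r addr0. Qed.
Lemma H1 (x : 'rV[R]_4) : Hh 1 x = u_frame x.
Proof. by apply/matrixP => i j; rewrite mxE subrr rmorph0 rmorph1 mul1r mul0r add0r. Qed.

Lemma rank_u (x : 'rV[R]_4) : S3 x -> \rank (u_frame x) = 2%N.
Proof.
move=> /S3_sum hs; apply: (@rank2_of _ _ 0 1).
rewrite !mxE /=.
apply/eqP => /(congr1 (@complex.Re R)) /= h.
have : (1:R) = 0 by rewrite -hs -h; ring.
by apply/eqP; rewrite oner_eq0.
Qed.

Lemma realc_neq0 (a : R) : a != 0 -> (a%:C)%C != 0 :> complex R.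
Proof. by move=> a0; apply/eqP => /(congr1 (@complex.Re R)) /= /eqP; apply/negP. Qed.

Lemma rank_H (t : R) (x : 'rV[R]_4) : 0 <= t <= 1 -> S3 x -> \rank (Hh t x) = 2%N.
Proof.
move=> /andP[t0 t1] hS.
have [->|t1'] := eqVneq t 1; first by rewrite H1 rank_u.
have ht : t < 1 by rewrite lt_neqAle t1' t1.
have A0 : (1 - t%:C)%C != 0 :> complex R.
  have -> : (1 - t%:C)%C = ((1-t)%:C)%C :> complex R by rewrite rmorphB rmorph1.
  by apply: realc_neq0; rewrite subr_eq0 eq_sym.
have e : ((1-t)%:C)%C = 1 - (t%:C)%C :> complex R by rewrite rmorphB rmorph1.
have e2 : ((2-t)%:C)%C = 2 - (t%:C)%C :> complex R by rewrite rmorphB rmorph_nat.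
have [w0|w0] := eqVneq (wcoord x) 0.
- apply: (@rank2_of _ _ 0 2); rewrite !mxE /= e.
  rewrite [X in X != 0](_ : _ = zcoord x * ((2 - t%:C) * (1 - t%:C)))%C; last by ring.
  have n1 : (1 - t) != 0 by apply/eqP => h; lra.
  have n2 : (2 - t) != 0 by apply/eqP => h; lra.
  have nz : zcoord x != 0.
    have hs := S3_sum hS.
    have := congr1 (@complex.Re R) w0; have := congr1 (@complex.Im R) w0.
    rewrite /= => x3 x2.
    apply/eqP => z0.
    have := congr1 (@complex.Re R) z0; have := congr1 (@complex.Im R) z0.
    rewrite /= => x1 x0.
    move: hs; rewrite x0 x1 x2 x3 !expr2 !mul0r !addr0 => /esym/eqP.
    by rewrite oner_eq0.
  by rewrite -e -e2 !mulf_neq0 // realc_neq0.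
- apply: (@rank2_of _ _ 1 2); rewrite !mxE /= e.
  rewrite [X in X != 0](_ : _ = wcoord x * (1 - t%:C))%C; last by ring.
  by rewrite mulf_neq0 // -e.
Qed.
End M.

Theorem proposition4p6 (R : realType) :
  homotopic_S3_V2 (@smale_map_crosscap R) (@u_frame R).
Proof.
exists (@Hh R); split.
- apply: continuous_subspaceT; exact: realify_cont.
- by move=> t x ht hx; apply: rank_H.
- by move=> x _; apply: H0.
- by move=> x _; apply: H1.
Qed.
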